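(* Let $n$ be a positive integer, $\vec{\jmath}=(j_1,\ldots,j_n)\in\mathbb{Z}_{\geq 0}^n$ and $\vec{e}=(e_1,\ldots,e_{n-1})\in\{1,3\}^{n-1}$. Assume that it is not the case that ($n\geq 2$, $j_1=0$ and $e_1=1$), and not the case that ($n\geq 2$, $j_n=0$ and $e_{n-1}=1$). Put $e_0=e_n=1$ and, for $k=0,\ldots,n$, define \[X(k)=\begin{cases} \zeta^\star(\{2\}^{j_1},e_1,\{2\}^{j_2},e_2,\ldots,\{2\}^{j_k},e_k)\cdot\zeta^\star(\{2\}^{j_n},e_{n-1},\{2\}^{j_{n-1}},e_{n-2},\ldots,\{2\}^{j_{k+1}},e_k) & \text{if } e_k=1,\\[4pt] \zeta^\star(\{2\}^{j_1},e_1,\ldots,\{2\}^{j_{k-1}},e_{k-1},\{2\}^{j_k+1})\cdot\zeta^\star(\{2\}^{j_n},e_{n-1},\ldots,\{2\}^{j_{k+2}},e_{k+1},\{2\}^{j_{k+1}+1}) & \text{if } e_k=3. \end{cases}\] Explicitly, in the case $e_k=1$ the first factor is the index consisting of the blocks $\{2\}^{j_i},e_i$ for $i=1,\ldots,k$ (for $k=0$ it is the empty index), and the second factor is the index consisting of the blocks $\{2\}^{j_i},e_{i-1}$ for $i=n,n-1,\ldots,k+1$ (for $k=n$ it is the empty index). Then \[\sum_{k=0}^n(-1)^kX(k)=0.\]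
   Context: For positive integers $k_1,\ldots,k_r$ with $k_1\geq 2$, $\zeta^\star(k_1,\ldots,k_r)=\sum_{m_1\geq\cdots\geq m_r\geq 1} m_1^{-k_1}\cdots m_r^{-k_r}$, and $\zeta^\star(\varnothing)=1$ for the empty index. $\{2\}^j$ denotes $j$ copies of $2$ (empty if $j=0$). $\{1,3\}^{n-1}$ denotes the set of $(n-1)$-tuples with entries in $\{1,3\}$. *)

(* Defs.v *)
From Stdlib Require Import Reals Lra Lia Arith List.
From Coquelicot Require Import Coquelicot.
Import ListNotations.
Open Scope R_scope.

(* Truncated multiple zeta-star sum:
   zs_trunc N [k1;...;kr] = sum_{N >= m1 >= m2 >= ... >= mr >= 1} m1^-k1 ... mr^-kr *)
Fixpoint zs_trunc (N : nat) (ks : list nat) : R :=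
  match ks with
  | [] => 1
  | k :: ks' =>
      sum_f_R0 (fun i => / (INR (S i)) ^ k * zs_trunc (S i) ks') (pred N)
      * (if (N =? 0)%nat then 0 else 1)
  end.

(* zeta_star s = sum_{m1 >= ... >= mr >= 1} m1^-k1 ... mr^-kr, defined as the limit
   of the truncations m1 <= N (the terms are nonnegative, so this is the value of
   the series whenever it converges; zeta_star [] = 1). *)
Definition zeta_star (ks : list nat) : R :=
  match ks with
  | [] => 1
  | _ => real (Lim_seq (fun N => zs_trunc N ks))
  end.

Definition eext (n : nat) (e : nat -> nat) (k : nat) : nat :=
  if (k =? 0)%nat then 1%nat else if (k =? n)%nat then 1%nat else e k.

Definition blocks (j a : nat -> nat) (is : list nat) : list nat :=
  flat_map (fun i => repeat 2%nat (j i) ++ [a i]) is.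

Definition Xk (n : nat) (j e : nat -> nat) (k : nat) : R :=
  let E := eext n e in
  if (E k =? 3)%nat then
    zeta_star (blocks j E (seq 1 (k - 1)%nat) ++ repeat 2%nat (j k + 1)%nat)
    * zeta_star (blocks j (fun i => E (i - 1)%nat) (rev (seq (k + 2)%nat (n - k - 1)%nat))
                 ++ repeat 2%nat (j (k + 1)%nat + 1)%nat)
  else
    zeta_star (blocks j E (seq 1 k))
    * zeta_star (blocks j (fun i => E (i - 1)%nat) (rev (seq (k + 1)%nat (n - k)%nat))).

(* Main.v *)
Require Import Defs.
From Stdlib Require Import Reals Lra Lia Arith List ZArith.
From Coquelicot Require Import Coquelicot.
Import ListNotations.
Open Scope R_scope.

Fixpoint sm (f : nat -> R) (n : nat) : R :=
  match n with O => 0 | S k => sm f k + f (S k) end.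

Lemma sm_ext f g n : (forall m, (1 <= m <= n)%nat -> f m = g m) -> sm f n = sm g n.
Proof.
  induction n; intros H; simpl; auto.
  rewrite IHn, H; [reflexivity|lia|]. intros; apply H; lia.
Qed.

Lemma sm_le f g n : (forall m, (1 <= m <= n)%nat -> f m <= g m) -> sm f n <= sm g n.
Proof.
  induction n; intros H; simpl; [lra|].
  assert (sm f n <= sm g n) by (apply IHn; intros; apply H; lia).
  assert (f (S n) <= g (S n)) by (apply H; lia). lra.
Qed.

Lemma sm_nonneg f n : (forall m, (1 <= m <= n)%nat -> 0 <= f m) -> 0 <= sm f n.
Proof.
  intros H. replace 0 with (sm (fun _ => 0) n).
  - apply sm_le; auto.
  - induction n; simpl; auto. rewrite IHn; [lra|]. intros; apply H; lia.
Qed.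

Lemma sm_plus f g n : sm (fun m => f m + g m) n = sm f n + sm g n.
Proof. induction n; simpl; [lra|]. rewrite IHn; lra. Qed.

Lemma sm_scal c f n : sm (fun m => c * f m) n = c * sm f n.
Proof. induction n; simpl; [lra|]. rewrite IHn; lra. Qed.

Lemma sm_zero n : sm (fun _ => 0) n = 0.
Proof. induction n; simpl; [lra|]. rewrite IHn; lra. Qed.

Lemma sm_mono f : (forall m, (1 <= m)%nat -> 0 <= f m) -> forall a b, (a <= b)%nat -> sm f a <= sm f b.
Proof.
  intros H a b Hab. induction Hab; [lra|]. simpl. assert (0 <= f (S m)) by (apply H; lia). lra.
Qed.

Lemma sumf_sm g N : sum_f_R0 (fun i => g (S i)) N = sm g (S N).
Proof. induction N; simpl; [ring|]. simpl in IHN. rewrite IHN. ring. Qed.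

Lemma zs_cons N k ks : zs_trunc N (k::ks) = sm (fun m => / INR m ^ k * zs_trunc m ks) N.
Proof.
  destruct N.
  - simpl. ring.
  - cbn [zs_trunc]. replace ((S N =? 0)%nat) with false by reflexivity.
    rewrite Rmult_1_r. simpl pred.
    exact (sumf_sm (fun m => / INR m ^ k * zs_trunc m ks) N).
Qed.

Lemma sm_minus f g n : sm (fun m => f m - g m) n = sm f n - sm g n.
Proof. induction n; simpl; [lra|]. rewrite IHn; lra. Qed.

Lemma inv_pow_pos m k : (1 <= m)%nat -> 0 < / INR m ^ k.
Proof. intros; apply Rinv_0_lt_compat, pow_lt, lt_0_INR; lia. Qed.

Lemma INR_pos m : (1 <= m)%nat -> 0 < INR m.
Proof. intros; apply lt_0_INR; lia. Qed.

Definition h (m : nat) : R := sm (fun p => / INR p) m.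
Definition h2 (m : nat) : R := sm (fun p => / INR p ^ 2) m.
Definition C (p q : nat) : R := h p + h q - h (p + q).

Lemma Cdef p q : C p q = h p + h q - h (p + q).
Proof. reflexivity. Qed.

Lemma hS m : h (S m) = h m + / INR (S m).
Proof. reflexivity. Qed.

Lemma hshift a q : sm (fun b => / INR (a + b)) q = h (a + q) - h a.
Proof.
  induction q; simpl.
  - rewrite Nat.add_0_r; ring.
  - rewrite IHq, Nat.add_succ_r, hS. ring.
Qed.

Lemma C0l q : C 0 q = 0.
Proof. unfold C. simpl. unfold h at 1. simpl. ring. Qed.

Lemma CS p b : C (S p) b = C p b + (/ INR (S p) - / INR (S p + b)).
Proof. unfold C. simpl (S p + b)%nat. rewrite !hS. ring. Qed.

Lemma I2 p q : sm (fun a => / INR a ^ 2 * C a q) p = sm (fun b => / INR b ^ 2 * C p b) q.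
Proof.
  induction p.
  - simpl. rewrite (sm_ext _ (fun _ => 0)); [rewrite sm_zero; ring|].
    intros; rewrite C0l; ring.
  - cbn [sm]. rewrite IHp.
    rewrite (sm_ext (fun b => / INR b ^ 2 * C (S p) b)
      (fun b => / INR b ^ 2 * C p b + / INR (S p) ^ 2 * (/ INR b - / INR (S p + b)))).
    + rewrite sm_plus, sm_scal, sm_minus, hshift. fold (h q). rewrite (Cdef (S p) q). ring.
    + intros b Hb. rewrite CS. rewrite plus_INR.
      assert (0 < INR b) by (apply INR_pos; lia).
      assert (0 < INR (S p)) by (apply INR_pos; lia).
      field. lra.
Qed.

Lemma I1 p q : sm (fun b => / INR b * C p b) q + sm (fun a => / INR a * C a q) p = h p * h q.
Proof.
  induction p.
  - simpl. rewrite (sm_ext _ (fun _ => 0)); [rewrite sm_zero; unfold h; simpl; ring|].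
    intros; rewrite C0l; ring.
  - cbn [sm].
    rewrite (sm_ext (fun b => / INR b * C (S p) b)
      (fun b => / INR b * C p b + / INR (S p) * / INR (S p + b))).
    + rewrite sm_plus, sm_scal, hshift, hS.
      rewrite (Cdef (S p) q), hS.
      transitivity (h p * h q + / INR (S p) * h q); [rewrite <- IHp; ring | ring].
    + intros b Hb. rewrite CS. rewrite plus_INR.
      assert (0 < INR b) by (apply INR_pos; lia).
      assert (0 < INR (S p)) by (apply INR_pos; lia).
      field. lra.
Qed.

Lemma h2S m : h2 (S m) = h2 m + / INR (S m) ^ 2.
Proof. reflexivity. Qed.

Lemma I3 p q : sm (fun b => / INR b ^ 3 * C p b) q + sm (fun a => / INR a ^ 3 * C a q) p = h2 p * h2 q.
Proof.
  induction p.
  - simpl. rewrite (sm_ext _ (fun _ => 0)); [rewrite sm_zero; unfold h2; simpl; ring|].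
    intros; rewrite C0l; ring.
  - cbn [sm].
    rewrite (sm_ext (fun b => / INR b ^ 3 * C (S p) b)
      (fun b => / INR b ^ 3 * C p b + (/ INR (S p) ^ 2 * / INR b ^ 2
          - / INR (S p) ^ 3 * / INR b + / INR (S p) ^ 3 * / INR (S p + b)))).
    + rewrite sm_plus, !sm_plus, !sm_minus, !sm_scal, hshift, h2S.
      fold (h q). fold (h2 q).
      rewrite (Cdef (S p) q), hS.
      transitivity (h2 p * h2 q + / INR (S p) ^ 2 * h2 q); [rewrite <- IHp; ring | ring].
    + intros b Hb. rewrite CS. rewrite plus_INR.
      assert (0 < INR b) by (apply INR_pos; lia).
      assert (0 < INR (S p)) by (apply INR_pos; lia).
      field. lra.
Qed.

Fixpoint zsw (N : nat) (L : list nat) (phi : nat -> R) {struct L} : R :=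
  match L with
  | [] => phi N
  | k :: L' => sm (fun m => / INR m ^ k * zsw m L' phi) N
  end.

Lemma zsw_one N L : zsw N L (fun _ => 1) = zs_trunc N L.
Proof.
  revert N; induction L as [|k L IH]; intros N; cbn [zsw].
  - reflexivity.
  - rewrite zs_cons. apply sm_ext; intros. rewrite IH; reflexivity.
Qed.

Lemma zsw_app N L k phi :
  zsw N (L ++ [k]) phi = zsw N L (fun m => sm (fun p => / INR p ^ k * phi p) m).
Proof.
  revert N; induction L as [|k' L IH]; intros N; cbn [zsw].
  - reflexivity.
  - apply sm_ext; intros. rewrite IH; reflexivity.
Qed.

Lemma zsw_ext N L phi psi : (forall m, (m <= N)%nat -> phi m = psi m) -> zsw N L phi = zsw N L psi.
Proof.
  revert N; induction L as [|k L IH]; intros N H; cbn [zsw].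
  - apply H; lia.
  - apply sm_ext; intros. rewrite (IH m); [reflexivity|]. intros; apply H; lia.
Qed.

Lemma zsw_plus N L phi psi : zsw N L (fun m => phi m + psi m) = zsw N L phi + zsw N L psi.
Proof.
  revert N; induction L as [|k L IH]; intros N; cbn [zsw].
  - reflexivity.
  - rewrite <- sm_plus. apply sm_ext; intros. rewrite IH; ring.
Qed.

Lemma zsw_scal N L c phi : zsw N L (fun m => c * phi m) = c * zsw N L phi.
Proof.
  revert N; induction L as [|k L IH]; intros N; cbn [zsw].
  - reflexivity.
  - rewrite <- sm_scal. apply sm_ext; intros. rewrite IH; ring.
Qed.



Lemma zsw_zero N L : zsw N L (fun _ => 0) = 0.
Proof.
  rewrite (zsw_ext _ _ _ (fun m => 0 * 1)) by (intros; ring).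
  rewrite (zsw_scal N L 0 (fun _ => 1)); ring.
Qed.

Lemma zsw_sm N L f M : zsw N L (fun q => sm (fun p => f p q) M) = sm (fun p => zsw N L (f p)) M.
Proof.
  induction M; simpl.
  - apply zsw_zero.
  - rewrite zsw_plus, IHM; reflexivity.
Qed.

Lemma zsw_le N L phi psi : (forall m, (m <= N)%nat -> phi m <= psi m) -> zsw N L phi <= zsw N L psi.
Proof.
  revert N; induction L as [|k L IH]; intros N H; cbn [zsw].
  - apply H; lia.
  - apply sm_le; intros. apply Rmult_le_compat_l.
    + left; apply inv_pow_pos; lia.
    + apply IH. intros; apply H; lia.
Qed.

Lemma zsw_nonneg N L phi : (forall m, (m <= N)%nat -> 0 <= phi m) -> 0 <= zsw N L phi.
Proof.
  intros H. rewrite <- (zsw_zero N L). apply zsw_le; auto.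
Qed.

Definition Z N L R := zsw N L (fun p => zsw N R (fun q => C p q)).

Lemma Csym p q : C p q = C q p.
Proof. unfold C. rewrite Nat.add_comm. ring. Qed.

Lemma pull N R k p : sm (fun a => / INR a ^ k * zsw N R (fun q => C a q)) p = zsw N R (fun q => sm (fun a => / INR a ^ k * C a q) p).
Proof.
  rewrite (zsw_sm N R (fun a q => / INR a ^ k * C a q)).
  apply sm_ext; intros. rewrite zsw_scal; reflexivity.
Qed.

Lemma T2 N L R : Z N (L ++ [2%nat]) R = Z N L (R ++ [2%nat]).
Proof.
  unfold Z. rewrite zsw_app. apply zsw_ext; intros p _.
  rewrite zsw_app, pull. apply zsw_ext; intros q _.
  rewrite I2. apply sm_ext; intros; reflexivity.
Qed.

Lemma zs_app N L k : zs_trunc N (L ++ [k]) = zsw N L (fun m => sm (fun p => / INR p ^ k) m).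
Proof.
  rewrite <- zsw_one, zsw_app. apply zsw_ext; intros. apply sm_ext; intros; ring.
Qed.

Lemma zs_prod N L R k : zs_trunc N (L ++ [k]) * zs_trunc N (R ++ [k]) =
  zsw N L (fun p => zsw N R (fun q => sm (fun a => / INR a ^ k) p * sm (fun a => / INR a ^ k) q)).
Proof.
  rewrite !zs_app.
  transitivity (zsw N L (fun p => sm (fun a => / INR a ^ k) p * zsw N R (fun q => sm (fun a => / INR a ^ k) q))).
  - rewrite Rmult_comm, <- zsw_scal. apply zsw_ext; intros; ring.
  - apply zsw_ext; intros. rewrite <- zsw_scal. reflexivity.
Qed.

Lemma T1 N L R : Z N (L ++ [1%nat]) R + Z N L (R ++ [1%nat]) = zs_trunc N (L ++ [1%nat]) * zs_trunc N (R ++ [1%nat]).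
Proof.
  rewrite zs_prod. unfold Z. rewrite zsw_app, <- zsw_plus. apply zsw_ext; intros p _.
  rewrite zsw_app, pull, <- zsw_plus. apply zsw_ext; intros q _.
  rewrite !(sm_ext (fun a => / INR a ^ 1) (fun a => / INR a)) by (intros; simpl; rewrite Rmult_1_r; reflexivity).
  fold (h p) (h q). rewrite <- (I1 p q).
  rewrite Rplus_comm. f_equal; apply sm_ext; intros; simpl; rewrite Rmult_1_r; reflexivity.
Qed.

Lemma T3 N L R : Z N (L ++ [3%nat]) R + Z N L (R ++ [3%nat]) = zs_trunc N (L ++ [2%nat]) * zs_trunc N (R ++ [2%nat]).
Proof.
  rewrite zs_prod. unfold Z. rewrite zsw_app, <- zsw_plus. apply zsw_ext; intros p _.
  rewrite zsw_app, pull, <- zsw_plus. apply zsw_ext; intros q _.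
  fold (h2 p) (h2 q). rewrite <- (I3 p q).
  rewrite Rplus_comm. f_equal; apply sm_ext; intros; ring.
Qed.

Lemma T2rep N L R a : Z N (L ++ repeat 2%nat a) R = Z N L (R ++ repeat 2%nat a).
Proof.
  revert L R; induction a; intros L R; simpl.
  - rewrite !app_nil_r; reflexivity.
  - replace (L ++ 2%nat :: repeat 2%nat a) with ((L ++ [2%nat]) ++ repeat 2%nat a) by (rewrite <- app_assoc; reflexivity).
    rewrite IHa.
    replace (R ++ 2%nat :: repeat 2%nat a) with (R ++ repeat 2%nat a ++ [2%nat]).
    + rewrite app_assoc, T2. reflexivity.
    + f_equal. clear. induction a; simpl; congruence.
Qed.

Lemma zs_nonneg N L : 0 <= zs_trunc N L.
Proof. rewrite <- zsw_one. apply zsw_nonneg; intros; lra. Qed.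

Lemma zs_mono N L : zs_trunc N L <= zs_trunc (S N) L.
Proof.
  destruct L as [|k L].
  - simpl. lra.
  - rewrite !zs_cons. cbn [sm].
    assert (0 <= / INR (S N) ^ k * zs_trunc (S N) L).
    { apply Rmult_le_pos; [left; apply inv_pow_pos; lia| apply zs_nonneg]. }
    lra.
Qed.

Lemma h_nonneg m : 0 <= h m.
Proof. unfold h. apply sm_nonneg; intros; left; apply Rinv_0_lt_compat, INR_pos; lia. Qed.

Lemma h_mono a b : (a <= b)%nat -> h a <= h b.
Proof. intros; unfold h; apply sm_mono; auto. intros; left; apply Rinv_0_lt_compat, INR_pos; lia. Qed.

Lemma inv_pow_le m k k' : (1 <= m)%nat -> (1 <= k' <= k)%nat -> / INR m ^ k <= / INR m ^ k'.
Proof.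
  intros Hm Hk. apply Rinv_le_contravar.
  - apply pow_lt, INR_pos; lia.
  - apply Rle_pow; [|lia]. apply (le_INR 1); lia.
Qed.

Lemma zs_le_hpow L : List.Forall (fun x => (1 <= x)%nat) L -> forall m, zs_trunc m L <= h m ^ length L.
Proof.
  induction L as [|k L IH]; intros HF m.
  - simpl. lra.
  - inversion HF; subst. rewrite zs_cons. cbn [length pow].
    rewrite Rmult_comm. unfold h at 2. rewrite <- sm_scal.
    apply sm_le; intros i Hi.
    rewrite (Rmult_comm (h m ^ length L)).
    apply Rmult_le_compat.
    + left; apply inv_pow_pos; lia.
    + apply zs_nonneg.
    + replace (/ INR i) with (/ INR i ^ 1) by (simpl; rewrite Rmult_1_r; reflexivity).
      apply inv_pow_le; lia.
    + apply Rle_trans with (h i ^ length L); auto.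
      apply pow_incr; split; [apply h_nonneg| apply h_mono; lia].
Qed.

Lemma pow_diff a b r : 0 <= b <= a -> a ^ S r - b ^ S r <= INR (S r) * a ^ r * (a - b).
Proof.
  intros [Hb Hab]. induction r.
  - simpl. lra.
  - assert (Hp : b ^ S r <= a ^ S r) by (apply pow_incr; lra).
    assert (Ha : 0 <= a) by lra.
    replace (a ^ S (S r) - b ^ S (S r)) with (a * (a ^ S r - b ^ S r) + b ^ S r * (a - b)) by (simpl; ring).
    rewrite S_INR.
    assert (a * (a ^ S r - b ^ S r) <= a * (INR (S r) * a ^ r * (a - b))) by (apply Rmult_le_compat_l; auto).
    assert (b ^ S r * (a - b) <= a ^ S r * (a - b)) by (apply Rmult_le_compat_r; lra).
    replace ((INR (S r) + 1) * a ^ S r * (a - b)) with (a * (INR (S r) * a ^ r * (a - b)) + a ^ S r * (a - b)) by (simpl; ring).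
    lra.
Qed.

Lemma telescope f g c N : (forall m, (1 <= m)%nat -> f m <= g m - g (S m) + c m) ->
  sm f N <= g 1%nat - g (S N) + sm c N.
Proof.
  intros H. induction N; cbn [sm].
  - lra.
  - assert (f (S N) <= g (S N) - g (S (S N)) + c (S N)) by (apply H; lia). lra.
Qed.

Lemma sm_shift f N : sm f (S N) = f 1%nat + sm (fun m => f (S m)) N.
Proof. induction N; cbn [sm] in *; [ring|]. rewrite IHN. ring. Qed.

Lemma inv_sq_le x : 1 <= x -> / x ^ 2 <= 2 * / (x * (x+1)).
Proof.
  intros Hx.
  replace (2 * / (x * (x + 1))) with (/ (x * (x + 1) / 2)) by (field; lra).
  apply Rinv_le_contravar; [assert (0 < x * (x+1)) by (apply Rmult_lt_0_compat; lra); lra|].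
  assert (Hq : x ^ 2 - x * (x + 1) / 2 = x * (x - 1) / 2) by field.
  assert (0 <= x * (x - 1)) by (apply Rmult_le_pos; lra). lra.
Qed.

Fixpoint Mb (r : nat) : R := match r with O => 2 | S r' => 2 + 2 * INR (S r') * Mb r' end.

Lemma abel r : forall N, sm (fun m => / INR m ^ 2 * h m ^ r) N <= Mb r.
Proof.
  induction r as [|r IH]; intros N.
  - apply Rle_trans with (2 * / INR 1 - 2 * / INR (S N) + sm (fun _ => 0) N).
    + apply (telescope _ (fun m => 2 * / INR m) (fun _ => 0)). intros m Hm.
      assert (Hx : 1 <= INR m) by (apply (le_INR 1); lia).
      rewrite S_INR. set (x := INR m) in *. simpl pow. rewrite !Rmult_1_r.
      replace (2 * / x - 2 * / (x + 1) + 0) with (/ (x * (x + 1) / 2)) by (field; lra).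
      apply Rinv_le_contravar; [assert (0 < x * (x+1)) by (apply Rmult_lt_0_compat; lra); lra|].
      assert (Hq : x * x - x * (x + 1) / 2 = x * (x - 1) / 2) by field.
      assert (0 <= x * (x - 1)) by (apply Rmult_le_pos; lra). lra.
    + rewrite sm_zero. simpl (INR 1). rewrite Rinv_1.
      assert (0 < / INR (S N)) by (apply Rinv_0_lt_compat, INR_pos; lia). simpl Mb. lra.
  - set (g := fun m => 2 * h m ^ S r / INR m).
    set (c := fun m => 2 * INR (S r) * (/ INR (S m) ^ 2 * h (S m) ^ r)).
    apply Rle_trans with (g 1%nat - g (S N) + sm c N).
    + apply (telescope _ g c). intros m Hm. unfold g, c.
      assert (Hx : 1 <= INR m) by (apply (le_INR 1); lia).
      rewrite S_INR.
      set (x := INR m) in *.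
      assert (Hh : h (S m) = h m + / (x + 1)) by (rewrite hS, S_INR; reflexivity).
      rewrite Hh.
      set (b := h m).
      assert (Hb : 0 <= b) by apply h_nonneg.
      assert (Hy : 0 < / (x + 1)) by (apply Rinv_0_lt_compat; lra).
      assert (Hd := pow_diff (b + / (x + 1)) b r ltac:(lra)).
      replace (b + / (x + 1) - b) with (/ (x + 1)) in Hd by ring.
      set (A := (b + / (x + 1)) ^ S r) in *.
      set (B := b ^ S r) in *.
      set (P := (b + / (x + 1)) ^ r) in *.
      assert (HB : 0 <= B) by (apply pow_le; lra).
      assert (E1 : / x ^ 2 * B <= 2 * B * / (x * (x + 1))).
      { assert (/ x ^ 2 <= 2 * / (x * (x + 1))) by (apply inv_sq_le; lra).
        replace (2 * B * / (x * (x + 1))) with (2 * / (x * (x + 1)) * B) by ring.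
        apply Rmult_le_compat_r; lra. }
      assert (E2 : 2 * B / x - 2 * A / (x + 1) = 2 * B * / (x * (x + 1)) - 2 * (A - B) * / (x + 1)) by (field; lra).
      assert (E3 : (A - B) * / (x + 1) <= INR (S r) * P * / (x + 1) * / (x + 1)).
      { apply Rmult_le_compat_r; lra. }
      replace (/ (x + 1) ^ 2 * P) with (P * / (x + 1) * / (x + 1)) by (field; lra).
      lra.
    + unfold g.
      replace (2 * h 1 ^ S r / INR 1) with 2 by (unfold h; simpl sm; simpl INR; rewrite Rplus_0_l, Rinv_1, pow1; field).
      assert (0 <= 2 * h (S N) ^ S r / INR (S N)).
      { unfold Rdiv. apply Rmult_le_pos; [apply Rmult_le_pos; [lra| apply pow_le, h_nonneg]|].
        left; apply Rinv_0_lt_compat, INR_pos; lia. }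
      assert (sm c N <= 2 * INR (S r) * Mb r).
      { unfold c. rewrite sm_scal. apply Rmult_le_compat_l; [apply Rmult_le_pos; [lra|apply pos_INR]|].
        apply Rle_trans with (sm (fun m => / INR m ^ 2 * h m ^ r) (S N)); [|apply IH].
        rewrite sm_shift.
        assert (0 <= / INR 1 ^ 2 * h 1 ^ r) by (apply Rmult_le_pos; [left; apply inv_pow_pos; lia| apply pow_le, h_nonneg]).
        lra. }
      cbn [Mb]. lra.
Qed.

Definition adm (L : list nat) : Prop := match L with [] => True | x :: _ => (2 <= x)%nat end.

Lemma zs_bounded L : adm L -> List.Forall (fun x => (1 <= x)%nat) L -> exists B, forall N, zs_trunc N L <= B.
Proof.
  destruct L as [|k L]; intros Ha HF.
  - exists 1. intros; simpl; lra.
  - inversion HF; subst. simpl in Ha.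
    exists (Mb (length L)). intros N. rewrite zs_cons.
    apply Rle_trans with (sm (fun m => / INR m ^ 2 * h m ^ length L) N); [|apply abel].
    apply sm_le; intros m Hm. apply Rmult_le_compat.
    + left; apply inv_pow_pos; lia.
    + apply zs_nonneg.
    + apply inv_pow_le; lia.
    + apply zs_le_hpow; auto.
Qed.

Lemma zs_conv L : adm L -> List.Forall (fun x => (1 <= x)%nat) L ->
  is_lim_seq (fun N => zs_trunc N L) (zeta_star L).
Proof.
  intros Ha HF. destruct L as [|k L].
  - simpl. apply is_lim_seq_const.
  - destruct (zs_bounded _ Ha HF) as [B HB].
    assert (Hex : ex_finite_lim_seq (fun N => zs_trunc N (k :: L))).
    { apply ex_finite_lim_seq_incr with B; intros; [apply zs_mono| apply HB]. }
    destruct Hex as [l Hl].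
    unfold zeta_star. rewrite (is_lim_seq_unique _ _ Hl). simpl. exact Hl.
Qed.

Lemma sm_const c q : sm (fun _ => c) q = INR q * c.
Proof. induction q; cbn [sm]; [simpl; ring|]. rewrite IHq, S_INR. ring. Qed.

Lemma h_le_N N : h N <= INR N.
Proof.
  unfold h. rewrite <- (Rmult_1_r (INR N)), <- sm_const.
  apply sm_le; intros m Hm.
  assert (1 <= INR m) by (apply (le_INR 1); lia).
  rewrite <- Rinv_1. apply Rinv_le_contravar; lra.
Qed.

Lemma h_sq N : h N ^ 2 <= 4 * INR N.
Proof.
  induction N.
  - unfold h; simpl; lra.
  - rewrite hS, S_INR.
    assert (Hx : 0 <= INR N) by apply pos_INR.
    assert (Hh := h_le_N N). assert (Hh0 := h_nonneg N).
    set (y := / (INR N + 1)).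
    assert (Hy : 0 < y) by (apply Rinv_0_lt_compat; lra).
    assert (Hy1 : y <= 1) by (unfold y; rewrite <- Rinv_1; apply Rinv_le_contravar; lra).
    assert (Hhy : h N * y <= 1).
    { unfold y. apply Rmult_le_reg_r with (INR N + 1); [lra|].
      rewrite Rmult_assoc, Rinv_l by lra. lra. }
    replace (INR (S N)) with (INR N + 1) by (rewrite S_INR; reflexivity). fold y.
    simpl pow in *. nra.
Qed.

Lemma hN_lim : is_lim_seq (fun N => h N / INR N) 0.
Proof.
  apply is_lim_seq_Reals. intros eps Heps.
  destruct (archimed (4 / (eps * eps))) as [Hup _].
  exists (S (Z.to_nat (up (4 / (eps * eps))))). intros n Hn.
  unfold R_dist. rewrite Rminus_0_r.
  assert (Hn1 : (1 <= n)%nat) by lia.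
  assert (Hnpos : 0 < INR n) by (apply INR_pos; lia).
  assert (Hbig : 4 / (eps * eps) < INR n).
  { apply Rlt_le_trans with (IZR (up (4 / (eps * eps)))); auto.
    assert (0 < 4 / (eps * eps)) by (apply Rdiv_lt_0_compat; nra).
    assert (0 <= up (4 / (eps * eps)))%Z.
    { apply le_IZR. lra. }
    rewrite <- (Z2Nat.id (up (4 / (eps * eps)))) by lia. rewrite <- INR_IZR_INZ.
    apply le_INR. lia. }
  assert (Hh0 := h_nonneg n). assert (Hsq := h_sq n).
  assert (0 <= h n / INR n) by (apply Rdiv_le_0_compat; lra).
  rewrite Rabs_pos_eq by lra.
  destruct (Rlt_or_le (h n / INR n) eps) as [Hl|Hl]; auto.
  exfalso.
  assert (Hb2 : 4 < eps * eps * INR n).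
  { apply Rmult_lt_reg_r with (/ (eps * eps)); [apply Rinv_0_lt_compat; nra|].
    replace (eps * eps * INR n * / (eps * eps)) with (INR n) by (field; lra). unfold Rdiv in Hbig. lra. }
  assert (eps * INR n <= h n).
  { replace (h n) with (h n / INR n * INR n) by (field; lra). nra. }
  simpl in Hsq.
  assert (H1 : eps * INR n * (eps * INR n) <= h n * h n) by (apply Rmult_le_compat; nra).
  assert (H2 : (eps * eps * INR n) * INR n <= 4 * INR n) by nra.
  apply Rmult_le_reg_r in H2; [lra|lra].
Qed.

Lemma err_lim R' k : (2 <= k)%nat -> adm R' -> List.Forall (fun x => (1 <= x)%nat) R' ->
  is_lim_seq (fun N => zsw N (R' ++ [k]) (fun q => h (q + N) - h N)) 0.
Proof.
  intros Hk Ha HF.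
  destruct (zs_bounded R' Ha HF) as [B HB].
  assert (HB0 : 0 <= B) by (apply Rle_trans with (zs_trunc 0 R'); [apply zs_nonneg|apply HB]).
  apply is_lim_seq_le_le_loc with (u := fun _ => 0) (w := fun N => B * (h N / INR N)).
  - exists 1%nat. intros N HN.
    assert (HNpos : 0 < INR N) by (apply INR_pos; lia).
    split.
    + apply zsw_nonneg. intros q _. assert (h N <= h (q + N)) by (apply h_mono; lia). lra.
    + apply Rle_trans with (zsw N (R' ++ [k]) (fun q => / INR N * INR q)).
      { apply zsw_le. intros q _.
        rewrite Nat.add_comm, <- hshift.
        rewrite Rmult_comm, <- sm_const. apply sm_le. intros b Hb.
        apply Rinv_le_contravar; [lra|]. apply le_INR; lia. }
      rewrite (zsw_scal N _ (/ INR N) INR).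
      rewrite zsw_app.
      apply Rle_trans with (/ INR N * zsw N R' (fun m => h N * 1)).
      { apply Rmult_le_compat_l; [left; apply Rinv_0_lt_compat; lra|].
        apply zsw_le. intros m Hm. rewrite Rmult_1_r.
        apply Rle_trans with (h m); [|apply h_mono; auto].
        unfold h. apply sm_le. intros p Hp.
        assert (0 < INR p) by (apply INR_pos; lia).
        apply Rle_trans with (/ INR p ^ 2 * INR p).
        - apply Rmult_le_compat_r; [lra|]. apply inv_pow_le; lia.
        - simpl. right. field. lra. }
      rewrite zsw_scal, zsw_one.
      assert (0 <= h N) by apply h_nonneg.
      assert (zs_trunc N R' <= B) by apply HB.
      assert (0 <= / INR N) by (left; apply Rinv_0_lt_compat; lra).
      unfold Rdiv.
      replace (B * (h N * / INR N)) with (/ INR N * (h N * B)) by ring.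
      apply Rmult_le_compat_l; auto. apply Rmult_le_compat_l; auto.
  - apply is_lim_seq_const.
  - replace (Finite 0) with (Finite (B * 0)) by (f_equal; ring).
    apply is_lim_seq_mult'; [apply is_lim_seq_const| apply hN_lim].
Qed.

Lemma blocks_app j a l1 l2 : blocks j a (l1 ++ l2) = blocks j a l1 ++ blocks j a l2.
Proof. unfold blocks. apply flat_map_app. Qed.

Lemma blocks_cons j a i l : blocks j a (i :: l) = repeat 2%nat (j i) ++ a i :: blocks j a l.
Proof. unfold blocks. simpl. rewrite <- app_assoc. reflexivity. Qed.

Lemma blocks_one j a i : blocks j a [i] = repeat 2%nat (j i) ++ [a i].
Proof. unfold blocks. simpl. rewrite app_nil_r. reflexivity. Qed.

Definition Lk j E k := blocks j E (seq 1 (k - 1)) ++ repeat 2%nat (j k).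
Definition Lc j E k := blocks j E (seq 1 k).
Definition Rk n j E k := blocks j (fun i => E (i - 1)%nat) (rev (seq (k + 2) (n - k - 1))) ++ repeat 2%nat (j (k + 1)%nat).
Definition Rc n j E k := blocks j (fun i => E (i - 1)%nat) (rev (seq (k + 1) (n - k))).

Lemma Lc_Lk j E k : (1 <= k)%nat -> Lc j E k = Lk j E k ++ [E k].
Proof.
  intros Hk. destruct k; [lia|]. unfold Lc, Lk.
  replace (S k - 1)%nat with k by lia.
  rewrite seq_S, blocks_app, blocks_one, app_assoc. reflexivity.
Qed.

Lemma Lk_S j E k : Lk j E (S k) = Lc j E k ++ repeat 2%nat (j (S k)).
Proof. unfold Lk, Lc. replace (S k - 1)%nat with k by lia. reflexivity. Qed.

Lemma Rc_Rk n j E k : (k < n)%nat -> Rc n j E k = Rk n j E k ++ [E k].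
Proof.
  intros Hk. unfold Rc, Rk.
  replace (seq (k + 1) (n - k)) with (seq (k+1) (S (n - k - 1))) by (f_equal; lia).
  cbn [seq rev]. replace (S (k + 1)) with (k + 2)%nat by lia.
  rewrite blocks_app, blocks_one, app_assoc.
  replace (k + 1 - 1)%nat with k by lia. reflexivity.
Qed.

Lemma Rk_S n j E k : Rk n j E k = Rc n j E (S k) ++ repeat 2%nat (j (S k)).
Proof.
  unfold Rk, Rc. replace (k + 2)%nat with (S k + 1)%nat by lia.
  replace (n - k - 1)%nat with (n - S k)%nat by lia.
  replace (k + 1)%nat with (S k) by lia. reflexivity.
Qed.

Lemma Rc_n n j E : Rc n j E n = [].
Proof. unfold Rc. rewrite Nat.sub_diag. reflexivity. Qed.

Definition XN n j e N k : R :=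
  let E := eext n e in
  if (E k =? 3)%nat then
    zs_trunc N (blocks j E (seq 1 (k - 1)%nat) ++ repeat 2%nat (j k + 1)%nat)
    * zs_trunc N (blocks j (fun i => E (i - 1)%nat) (rev (seq (k + 2)%nat (n - k - 1)%nat))
                 ++ repeat 2%nat (j (k + 1)%nat + 1)%nat)
  else
    zs_trunc N (blocks j E (seq 1 k))
    * zs_trunc N (blocks j (fun i => E (i - 1)%nat) (rev (seq (k + 1)%nat (n - k)%nat))).

Lemma rep_S1 a : repeat 2%nat (a + 1) = repeat 2%nat a ++ [2%nat].
Proof. rewrite repeat_app. reflexivity. Qed.

Lemma XN_mid n j e N k : (1 <= k <= n - 1)%nat -> (eext n e k = 1 \/ eext n e k = 3)%nat ->
  XN n j e N k = Z N (Lc j (eext n e) k) (Rk n j (eext n e) k) + Z N (Lk j (eext n e) k) (Rc n j (eext n e) k).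
Proof.
  intros Hk HE. unfold XN. cbv zeta.
  rewrite Lc_Lk by lia. rewrite Rc_Rk by lia.
  destruct HE as [HE|HE]; rewrite HE.
  - simpl (1 =? 3)%nat. cbv iota.
    change (blocks j (eext n e) (seq 1 k)) with (Lc j (eext n e) k).
    change (blocks j (fun i => eext n e (i - 1)%nat) (rev (seq (k + 1) (n - k))))
      with (Rc n j (eext n e) k).
    rewrite Lc_Lk by lia. rewrite Rc_Rk by lia. rewrite HE.
    symmetry. apply T1.
  - simpl (3 =? 3)%nat. cbv iota.
    rewrite !rep_S1, !app_assoc.
    change (blocks j (eext n e) (seq 1 (k - 1)) ++ repeat 2%nat (j k)) with (Lk j (eext n e) k).
    change (blocks j (fun i => eext n e (i - 1)%nat) (rev (seq (k + 2) (n - k - 1))) ++ repeat 2%nat (j (k + 1)%nat))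
      with (Rk n j (eext n e) k).
    symmetry. apply T3.
Qed.

Lemma eext0 n e : eext n e 0 = 1%nat.
Proof. reflexivity. Qed.

Lemma eextn n e : (1 <= n)%nat -> eext n e n = 1%nat.
Proof. intros. unfold eext. destruct n; [lia|]. simpl. rewrite Nat.eqb_refl. reflexivity. Qed.

Lemma zsw_h N R : zsw N R (fun m => sm (fun p => / INR p ^ 1) m) = zsw N R h.
Proof. apply zsw_ext; intros. unfold h. apply sm_ext; intros. simpl. rewrite Rmult_1_r. reflexivity. Qed.

Lemma XN_0 n j e N : (1 <= n)%nat ->
  XN n j e N 0 = Z N [] (Rk n j (eext n e) 0) + zsw N (Rk n j (eext n e) 0) (fun q => h (q + N) - h N).
Proof.
  intros Hn. unfold XN. cbv zeta. rewrite eext0. simpl (1 =? 3)%nat. cbv iota.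
  change (blocks j (fun i => eext n e (i - 1)%nat) (rev (seq (0 + 1) (n - 0))))
    with (Rc n j (eext n e) 0).
  rewrite Rc_Rk by lia. rewrite eext0.
  replace (zs_trunc N (blocks j (eext n e) (seq 1 0))) with 1 by reflexivity.
  rewrite Rmult_1_l, zs_app, zsw_h. unfold Z. cbn [zsw].
  rewrite <- zsw_plus. apply zsw_ext; intros q _. unfold C. rewrite (Nat.add_comm q N). ring.
Qed.

Lemma XN_n n j e N : (1 <= n)%nat ->
  XN n j e N n = Z N (Lk j (eext n e) n) [] + zsw N (Lk j (eext n e) n) (fun q => h (q + N) - h N).
Proof.
  intros Hn. unfold XN. cbv zeta. rewrite eextn by lia. simpl (1 =? 3)%nat. cbv iota.
  change (blocks j (eext n e) (seq 1 n)) with (Lc j (eext n e) n).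
  rewrite Lc_Lk by lia. rewrite eextn by lia.
  rewrite Nat.sub_diag. replace (zs_trunc N (blocks j (fun i => eext n e (i - 1)%nat) (rev (seq (n + 1) 0)))) with 1 by reflexivity.
  rewrite Rmult_1_r, zs_app, zsw_h. unfold Z. cbn [zsw].
  rewrite <- zsw_plus. apply zsw_ext; intros q _. unfold C. ring.
Qed.

Lemma transport n j E N k : Z N (Lc j E k) (Rk n j E k) = Z N (Lk j E (S k)) (Rc n j E (S k)).
Proof. rewrite Rk_S, Lk_S. symmetry. apply T2rep. Qed.

Lemma telescope_alt (X A B : nat -> R) e0 en n : (1 <= n)%nat ->
  X 0%nat = A 0%nat + e0 -> X n = B n + en ->
  (forall k, (1 <= k <= n - 1)%nat -> X k = A k + B k) ->
  (forall k, (k < n)%nat -> A k = B (S k)) ->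
  sum_f_R0 (fun k => (-1) ^ k * X k) n = e0 + (-1) ^ n * en.
Proof.
  intros Hn H0 Hn' Hmid Htr.
  assert (Hc : forall m, (m < n)%nat -> sum_f_R0 (fun k => (-1) ^ k * X k) m = e0 + (-1) ^ m * A m).
  { induction m; intros Hm.
    - simpl. rewrite H0. ring.
    - rewrite tech5, IHm by lia. rewrite Hmid by lia. rewrite <- (Htr m) by lia. simpl. ring. }
  destruct n; [lia|].
  rewrite tech5, Hc by lia. rewrite Hn', <- Htr by lia. simpl. ring.
Qed.

Lemma finite_id n j e N : (1 <= n)%nat ->
  (forall i, (1 <= i <= n - 1)%nat -> e i = 1%nat \/ e i = 3%nat) ->
  sum_f_R0 (fun k => (-1) ^ k * XN n j e N k) n =
  zsw N (Rk n j (eext n e) 0) (fun q => h (q + N) - h N)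
  + (-1) ^ n * zsw N (Lk j (eext n e) n) (fun q => h (q + N) - h N).
Proof.
  intros Hn He.
  apply telescope_alt with (A := fun k => Z N (Lc j (eext n e) k) (Rk n j (eext n e) k))
                           (B := fun k => Z N (Lk j (eext n e) k) (Rc n j (eext n e) k)); auto.
  - rewrite XN_0 by auto. reflexivity.
  - rewrite XN_n by auto. rewrite Rc_n. reflexivity.
  - intros k Hk. apply XN_mid; auto.
    unfold eext. destruct (Nat.eqb_spec k 0); [lia|]. destruct (Nat.eqb_spec k n); [lia|].
    apply He; auto.
  - intros k Hk. apply transport.
Qed.

Lemma adm_blocks_cons j a i l t : (j i <> 0%nat \/ (2 <= a i)%nat) -> adm (blocks j a (i :: l) ++ t).
Proof.
  intros H. rewrite blocks_cons. destruct (j i) as [|m] eqn:Hj; simpl.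
  - destruct H as [H|H]; [lia|exact H].
  - auto.
Qed.

Lemma adm_rep a t : adm (repeat 2%nat (a + 1) ++ t).
Proof. rewrite Nat.add_1_r. simpl. auto. Qed.

Lemma adm_rep0 a : adm (repeat 2%nat (a + 1)).
Proof. rewrite Nat.add_1_r. simpl. auto. Qed.

Lemma rev_seq_S s m : rev (seq s (S m)) = (s + m)%nat :: rev (seq s m).
Proof. rewrite seq_S, rev_app_distr. reflexivity. Qed.

Lemma Forall_rep m : List.Forall (fun x => (1 <= x)%nat) (repeat 2%nat m).
Proof. apply Forall_forall. intros x Hx. apply repeat_spec in Hx. lia. Qed.

Lemma Forall_blocks j a l : (forall i, In i l -> (1 <= a i)%nat) -> List.Forall (fun x => (1 <= x)%nat) (blocks j a l).
Proof.
  induction l as [|i l IH]; intros H.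
  - constructor.
  - rewrite blocks_cons. apply Forall_app. split; [apply Forall_rep|].
    constructor; [apply H; simpl; auto|]. apply IH. intros; apply H; simpl; auto.
Qed.

Lemma adm_nil : adm [].
Proof. exact I. Qed.


Lemma lists_ok n j (E : nat -> nat) k :
  (2 <= n)%nat -> (forall i, (i <= n)%nat -> (1 <= E i)%nat) ->
  (j 1%nat = 0%nat -> (2 <= E 1%nat)%nat) -> (j n = 0%nat -> (2 <= E (n - 1)%nat)%nat) ->
  (k <= n)%nat ->
  (adm (blocks j E (seq 1 k)) /\ List.Forall (fun x => (1 <= x)%nat) (blocks j E (seq 1 k))) /\
  (adm (blocks j (fun i => E (i - 1)%nat) (rev (seq (k + 1) (n - k))))
   /\ List.Forall (fun x => (1 <= x)%nat) (blocks j (fun i => E (i - 1)%nat) (rev (seq (k + 1) (n - k))))) /\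
  ((1 <= k)%nat -> (k + 1 <= n)%nat ->
   (adm (blocks j E (seq 1 (k - 1)) ++ repeat 2%nat (j k + 1)%nat)
    /\ List.Forall (fun x => (1 <= x)%nat) (blocks j E (seq 1 (k - 1)) ++ repeat 2%nat (j k + 1)%nat)) /\
   (adm (blocks j (fun i => E (i - 1)%nat) (rev (seq (k + 2) (n - k - 1))) ++ repeat 2%nat (j (k + 1)%nat + 1)%nat)
    /\ List.Forall (fun x => (1 <= x)%nat) (blocks j (fun i => E (i - 1)%nat) (rev (seq (k + 2) (n - k - 1))) ++ repeat 2%nat (j (k + 1)%nat + 1)%nat))).
Proof.
  intros Hn HE H1 Hn' Hk.
  assert (HL : forall m, (m <= n)%nat -> List.Forall (fun x => (1 <= x)%nat) (blocks j E (seq 1 m))).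
  { intros m Hm. apply Forall_blocks. intros i Hi. apply in_seq in Hi. apply HE. lia. }
  assert (HR : forall s m, (1 <= s)%nat -> (s + m <= n + 1)%nat ->
     List.Forall (fun x => (1 <= x)%nat) (blocks j (fun i => E (i - 1)%nat) (rev (seq s m)))).
  { intros s m Hs Hsm. apply Forall_blocks. intros i Hi. apply in_rev in Hi. apply in_seq in Hi. apply HE. lia. }
  assert (AL : forall m t, (1 <= m)%nat -> adm (blocks j E (seq 1 m) ++ t)).
  { intros m t Hm. destruct m; [lia|]. simpl seq. apply adm_blocks_cons.
    destruct (Nat.eq_dec (j 1%nat) 0); [right; auto|left; auto]. }
  assert (AR : forall s m t, (s + m = n + 1)%nat -> (1 <= m)%nat ->
     adm (blocks j (fun i => E (i - 1)%nat) (rev (seq s m)) ++ t)).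
  { intros s m t Hsm Hm. destruct m; [lia|]. rewrite rev_seq_S. apply adm_blocks_cons.
    replace (s + m)%nat with n by lia.
    destruct (Nat.eq_dec (j n) 0); [right; auto|left; auto]. }
  split; [|split].
  - split; [|apply HL; auto].
    destruct k; [apply adm_nil|]. rewrite <- (app_nil_r (blocks _ _ _)). apply AL; lia.
  - split; [|apply HR; lia].
    destruct (Nat.eq_dec k n) as [->|Hkn].
    + rewrite Nat.sub_diag. apply adm_nil.
    + rewrite <- (app_nil_r (blocks _ _ _)). apply AR; lia.
  - intros Hk1 Hk2. split.
    + split.
      * destruct (Nat.eq_dec k 1) as [->|Hk1'].
        -- exact (adm_rep0 (j 1%nat)).
        -- apply AL; lia.
      * apply Forall_app; split; [apply HL; lia| apply Forall_rep].
    + split.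
      * destruct (Nat.eq_dec (n - k - 1) 0) as [Hz|Hz].
        -- rewrite Hz. exact (adm_rep0 _).
        -- apply AR; lia.
      * apply Forall_app; split; [apply HR; lia| apply Forall_rep].
Qed.



Lemma conv_k n j e k : (2 <= n)%nat ->
  (forall i, (1 <= i <= n - 1)%nat -> e i = 1%nat \/ e i = 3%nat) ->
  ~ ((2 <= n)%nat /\ j 1%nat = 0%nat /\ e 1%nat = 1%nat) ->
  ~ ((2 <= n)%nat /\ j n = 0%nat /\ e (n - 1)%nat = 1%nat) ->
  (k <= n)%nat ->
  is_lim_seq (fun N => XN n j e N k) (Xk n j e k).
Proof.
  intros Hn He H1 Hn' Hk.
  assert (HE : forall i, (i <= n)%nat -> (1 <= eext n e i)%nat).
  { intros i Hi. unfold eext. destruct (Nat.eqb_spec i 0); [lia|]. destruct (Nat.eqb_spec i n); [lia|].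
    destruct (He i) as [->| ->]; lia. }
  assert (HE1 : j 1%nat = 0%nat -> (2 <= eext n e 1%nat)%nat).
  { intros Hj. unfold eext. destruct (Nat.eqb_spec 1 0); [lia|]. destruct (Nat.eqb_spec 1 n); [lia|].
    destruct (He 1%nat) as [Hx|Hx]; [lia| |lia]. exfalso; apply H1; auto. }
  assert (HEn : j n = 0%nat -> (2 <= eext n e (n - 1)%nat)%nat).
  { intros Hj. unfold eext. destruct (Nat.eqb_spec (n-1) 0); [lia|]. destruct (Nat.eqb_spec (n-1) n); [lia|].
    destruct (He (n-1)%nat) as [Hx|Hx]; [lia| |lia]. exfalso; apply Hn'; auto. }
  destruct (lists_ok n j (eext n e) k Hn HE HE1 HEn Hk) as [[A1 F1] [[A2 F2] P3]].
  unfold XN, Xk. cbv zeta.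
  destruct (eext n e k =? 3)%nat eqn:Hb.
  - apply Nat.eqb_eq in Hb.
    assert (k <> 0%nat) by (intro; subst; rewrite eext0 in Hb; discriminate).
    assert (k <> n) by (intro; subst; rewrite eextn in Hb by lia; discriminate).
    destruct (P3 ltac:(lia) ltac:(lia)) as [[A3 F3] [A4 F4]].
    apply is_lim_seq_mult'; apply zs_conv; auto.
  - apply is_lim_seq_mult'; apply zs_conv; auto.
Qed.

Lemma sum_lim (f : nat -> nat -> R) (g : nat -> R) m :
  (forall k, (k <= m)%nat -> is_lim_seq (fun N => f N k) (g k)) ->
  is_lim_seq (fun N => sum_f_R0 (f N) m) (sum_f_R0 g m).
Proof.
  induction m; intros H; simpl.
  - apply H; lia.
  - apply is_lim_seq_plus'; [apply IHm; intros; apply H; lia| apply H; lia].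
Qed.

Lemma adm_app_inv l t : adm (l ++ t) -> adm l.
Proof. destruct l; simpl; auto. Qed.

Lemma err_lim' L y : adm (L ++ [y]) -> List.Forall (fun x => (1 <= x)%nat) (L ++ [y]) ->
  (exists R' kk, L = R' ++ [kk] /\ (2 <= kk)%nat) ->
  is_lim_seq (fun N => zsw N L (fun q => h (q + N) - h N)) 0.
Proof.
  intros Ha HF [R' [kk [-> Hkk]]].
  rewrite <- app_assoc in Ha, HF.
  apply err_lim; auto.
  - eapply adm_app_inv; eauto.
  - apply Forall_app in HF; tauto.
Qed.

Theorem theorem3p1 (n : nat) (j e : nat -> nat) :
  (1 <= n)%nat ->
  (forall i, (1 <= i <= n - 1)%nat -> e i = 1%nat \/ e i = 3%nat) ->
  ~ ((2 <= n)%nat /\ j 1%nat = 0%nat /\ e 1%nat = 1%nat) ->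
  ~ ((2 <= n)%nat /\ j n = 0%nat /\ e (n - 1)%nat = 1%nat) ->
  sum_f_R0 (fun k => (-1) ^ k * Xk n j e k) n = 0.
Proof.
  intros Hn He H1 Hn'.
  destruct (Nat.eq_dec n 1) as [->|Hn2].
  { simpl. unfold Xk. simpl. rewrite eext0, (eextn 1 e) by lia. ring. }
  assert (Hn2' : (2 <= n)%nat) by lia.
  assert (HE : forall i, (i <= n)%nat -> (1 <= eext n e i)%nat).
  { intros i Hi. unfold eext. destruct (Nat.eqb_spec i 0); [lia|]. destruct (Nat.eqb_spec i n); [lia|].
    destruct (He i) as [->| ->]; lia. }
  assert (HE1 : j 1%nat = 0%nat -> eext n e 1%nat = 3%nat).
  { intros Hj. unfold eext. destruct (Nat.eqb_spec 1 0); [lia|]. destruct (Nat.eqb_spec 1 n); [lia|].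
    destruct (He 1%nat) as [Hx|Hx]; [lia| |auto]. exfalso; apply H1; auto. }
  assert (HEn : j n = 0%nat -> eext n e (n - 1)%nat = 3%nat).
  { intros Hj. unfold eext. destruct (Nat.eqb_spec (n-1) 0); [lia|]. destruct (Nat.eqb_spec (n-1) n); [lia|].
    destruct (He (n-1)%nat) as [Hx|Hx]; [lia| |auto]. exfalso; apply Hn'; auto. }
  assert (HE1' : j 1%nat = 0%nat -> (2 <= eext n e 1%nat)%nat) by (intros; rewrite HE1; auto).
  assert (HEn' : j n = 0%nat -> (2 <= eext n e (n - 1)%nat)%nat) by (intros; rewrite HEn; auto).
  set (E := eext n e) in *.
  assert (Lim1 : is_lim_seq (fun N => sum_f_R0 (fun k => (-1) ^ k * XN n j e N k) n)
                            (sum_f_R0 (fun k => (-1) ^ k * Xk n j e k) n)).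
  { apply (sum_lim (fun N k => (-1) ^ k * XN n j e N k)). intros k Hk.
    apply is_lim_seq_mult'; [apply is_lim_seq_const|]. apply conv_k; auto. }
  assert (Lim2 : is_lim_seq (fun N => sum_f_R0 (fun k => (-1) ^ k * XN n j e N k) n) 0).
  { apply is_lim_seq_ext with (fun N => zsw N (Rk n j E 0) (fun q => h (q + N) - h N)
                     + (-1) ^ n * zsw N (Lk j E n) (fun q => h (q + N) - h N)).
    { intros N. symmetry. apply finite_id; auto. }
    replace (Finite 0) with (Finite (0 + (-1) ^ n * 0)) by (f_equal; ring).
    apply is_lim_seq_plus'; [|apply is_lim_seq_mult'; [apply is_lim_seq_const|]].
    -
      destruct (lists_ok n j E 0 Hn2' HE HE1' HEn' ltac:(lia)) as [_ [[A2 F2] _]].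
      change (blocks j (fun i => E (i - 1)%nat) (rev (seq (0 + 1) (n - 0)))) with (Rc n j E 0) in A2, F2.
      rewrite Rc_Rk in A2, F2 by lia.
      apply (err_lim' _ (E 0%nat)); auto.
      rewrite Rk_S.
      destruct (j 1%nat) as [|a] eqn:Hj.
      + exists (Rk n j E 1), (E 1%nat). split.
        * simpl repeat. rewrite app_nil_r. apply Rc_Rk; lia.
        * auto.
      + exists (Rc n j E 1 ++ repeat 2%nat a), 2%nat. split; auto.
        rewrite <- app_assoc, <- rep_S1, Nat.add_1_r. reflexivity.
    - destruct (lists_ok n j E n Hn2' HE HE1' HEn' ltac:(lia)) as [[A1 F1] _].
      change (blocks j E (seq 1 n)) with (Lc j E n) in A1, F1.
      rewrite Lc_Lk in A1, F1 by lia.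
      apply (err_lim' _ (E n)); auto.
      pose proof (Lk_S j E (n - 1)) as HL. replace (S (n - 1)) with n in HL by lia. rewrite HL.
      destruct (j n) as [|a] eqn:Hj.
      + exists (Lk j E (n - 1)), (E (n - 1)%nat). split.
        * simpl repeat. rewrite app_nil_r. apply Lc_Lk; lia.
        * auto.
      + exists (Lc j E (n - 1) ++ repeat 2%nat a), 2%nat. split; auto.
        rewrite <- app_assoc, <- rep_S1, Nat.add_1_r. reflexivity. }
  apply is_lim_seq_unique in Lim1. apply is_lim_seq_unique in Lim2.
  rewrite Lim1 in Lim2. injection Lim2. auto.
Qed.
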